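(* Let $A$ be a finite alphabet with at least two letters and let $w\in A^{+}$ be unbordered, i.e. its maximal border is $\varepsilon$: no non-empty word is simultaneously a proper prefix and a proper suffix of $w$. Then for every integer $k\geq 0$ the language $\mathrm{Count}(w,k)$ has generalised star-height $0$, and for all integers $n\geq 2$ and $0\le k<n$ the language $\mathrm{ModCount}(w,k,n)$ has generalised star-height at most $1$.
   Context: A border of a word $w$ is a word that is both a prefix and a suffix of $w$; the maximal border is the longest proper border. Generalised regular expressions over $A$: $\emptyset$, $\varepsilon$ and each letter are expressions; if $E,F$ are expressions so are $E\cup F$, $EF$, $E^{\ast}$, $E^{c}$ (complement in $A^{\ast}$). Star-height: $h(\emptyset)=h(\varepsilon)=h(a)=0$, $h(E\cup F)=h(EF)=\max\{h(E),h(F)\}$, $h(E^{\ast})=h(E)+1$, $h(E^{c})=h(E)$; the star-height of a language is the minimum of $h(E)$ over expressions $E$ representing it. For $w\in A^{+}$ and $v\in A^{\ast}$, $|v|_{w}$ is the number of factorisations $v=xwy$ with $x,y\in A^{\ast}$ (overlapping occurrences counted separately). $\mathrm{Count}(w,k)=\{v\in A^{\ast}:|v|_{w}=k\}$ for $k\ge0$; $\mathrm{ModCount}(w,k,n)=\{v\in A^{\ast}:|v|_{w}\equiv k\pmod n\}$ for $n\ge2$, $0\le k<n$. *)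

(* Defs.v *)
From mathcomp Require Import all_boot.
Set Implicit Arguments. Unset Strict Implicit. Unset Printing Implicit Defensive.

Inductive gre (A : Type) : Type :=
| GEmpty : gre A
| GEps : gre A
| GLet : A -> gre A
| GUnion : gre A -> gre A -> gre A
| GConcat : gre A -> gre A -> gre A
| GStar : gre A -> gre A
| GCompl : gre A -> gre A.

Arguments GEmpty {A}.
Arguments GEps {A}.

Fixpoint lang (A : eqType) (E : gre A) (v : seq A) : Prop :=
  match E with
  | GEmpty => False
  | GEps => v = [::]
  | GLet a => v = [:: a]
  | GUnion E F => lang E v \/ lang F v
  | GConcat E F => exists x y, v = x ++ y /\ lang E x /\ lang F y
  | GStar E => exists ws : seq (seq A),
                 v = flatten ws /\ (forall u, u \in ws -> lang E u)
  | GCompl E => ~ lang E v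
  end.

Fixpoint sheight (A : Type) (E : gre A) : nat :=
  match E with
  | GEmpty | GEps | GLet _ => 0
  | GUnion E F | GConcat E F => maxn (sheight E) (sheight F)
  | GStar E => (sheight E).+1
  | GCompl E => sheight E
  end.

Definition gsh_le (A : eqType) (L : seq A -> Prop) (h : nat) : Prop :=
  exists E : gre A, sheight E <= h /\ forall v, lang E v <-> L v.

(* Number of factorisations v = x w y: positions i with w occurring at i. *)
Definition occ (A : eqType) (w v : seq A) : nat :=
  count (fun i => take (size w) (drop i v) == w) (iota 0 (size v).+1).

Definition Count (A : eqType) (w : seq A) (k : nat) : seq A -> Prop :=
  fun v => occ w v = k.

Definition ModCount (A : eqType) (w : seq A) (k n : nat) : seq A -> Prop :=
  fun v => occ w v = k %[mod n].

Definition unbordered (A : eqType) (w : seq A) : Prop :=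
  forall u : seq A, u != [::] -> size u < size w -> prefix u w -> suffix u w -> False.

(* Main.v *)
Require Import Defs.
From mathcomp Require Import all_boot.
From mathcomp Require Import zify.

Section Occ.
Variable A : eqType.
Variable w : seq A.
Hypothesis wn : w != [::].
Hypothesis ub : unbordered w.

Definition pat (v : seq A) i := take (size w) (drop i v) == w.

Lemma occE v : occ w v = count (pat v) (iota 0 (size v).+1).
Proof. by []. Qed.

Lemma nb d u e : w = d ++ u -> w = u ++ e -> 0 < size u -> 0 < size d -> False.
Proof.
move=> h1 h2 su sd; apply: (@ub u).
- by case: u su {h1 h2}.
- by rewrite h1 size_cat; lia.
- by apply/prefixP; exists e.
- by apply/suffixP; exists d.
Qed.

Lemma dropDcat (s1 s2 : seq A) k : drop (size s1 + k) (s1 ++ s2) = drop k s2.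
Proof. by elim: s1 => //= a s1 IH. Qed.

Lemma occ_cat x y : occ w (x ++ w ++ y) = occ w x + 1 + occ w y.
Proof.
set n := size w.
have n0 : 0 < n by rewrite /n; case: (w) wn.
rewrite !occE !size_cat.
have hx : count (pat x) (iota 0 (size x).+1) = count (pat x) (iota 0 (size x)).
  rewrite -addn1 iotaD count_cat /= {2}/pat drop_size.
  have -> : ([::] == w) = false by apply/eqP => h; move: wn; rewrite -h.
  by rewrite !addn0.
rewrite hx.
have -> : (size x + (n + size y)).+1 = size x + (1 + ((n-1) + (size y).+1)) by lia.
rewrite iotaD count_cat iotaD count_cat iotaD count_cat.
have h1 : count (pat (x ++ w ++ y)) (iota 0 (size x)) = count (pat x) (iota 0 (size x)).
  apply: eq_in_count => i; rewrite mem_iota add0n => /andP [_ ix].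
  rewrite /pat drop_cat ix.
  set d := drop i x.
  have sd : size d = size x - i by rewrite size_drop.
  case: (leqP n (size d)) => hd.
    by rewrite takel_cat.
  rewrite take_cat ltnNge (ltnW hd) /= takel_cat; last by lia.
  rewrite (@take_oversize _ _ d); last by lia.
  have -> : (d == w) = false by apply/eqP => h; move: hd; rewrite h /n ltnn.
  apply/eqP => h.
  apply: (@nb (d) (take (n - size d) w) (drop (n - size d) w)) => //.
  - by rewrite cat_take_drop.
  - rewrite size_takel; lia.
  - lia.
have h2 : count (pat (x ++ w ++ y)) (iota (0 + size x) 1) = 1.
  by rewrite /= /pat add0n drop_size_cat // take_size_cat // eqxx.
have h3 : count (pat (x ++ w ++ y)) (iota (0 + size x + 1) (n - 1)) = 0.
  rewrite (@eq_in_count _ _ pred0) ?count_pred0 // => i; rewrite mem_iota => /andP [i1 i2] /=.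
  have -> : i = size x + (i - size x) by lia.
  rewrite /pat dropDcat drop_cat.
  have -> : (i - size x < size w) = true by rewrite -/n; lia.
  set u := drop (i - size x) w.
  have su : size u = n - (i - size x) by rewrite size_drop.
  rewrite take_cat.
  have -> : (n < size u) = false by lia.
  apply/eqP => h.
  apply: (@nb (take (i - size x) w) (u) (take (n - size u) y)) => //.
  - by rewrite cat_take_drop.
  - lia.
  - rewrite size_takel; rewrite -/n; lia.
have h4 : count (pat (x ++ w ++ y)) (iota (0 + size x + 1 + (n - 1)) (size y).+1)
          = count (pat y) (iota 0 (size y).+1).
  have -> : 0 + size x + 1 + (n - 1) = size x + n + 0 by lia.
  rewrite iotaDl count_map; apply: eq_count => j /=.
  by rewrite /pat /n -addnA !dropDcat.
rewrite h1 h2 h3 h4; lia.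
Qed.

Lemma has_occ v : 0 < occ w v -> exists x y, v = x ++ w ++ y.
Proof.
rewrite occE -has_count => /hasP [i _ /eqP h].
exists (take i v), (drop (size w) (drop i v)).
by rewrite -{1}h !cat_take_drop.
Qed.

Lemma first_occ c v : occ w v = c.+1 ->
  exists x y, v = x ++ w ++ y /\ occ w x = 0 /\ occ w y = c.
Proof.
elim: {v} (size v) {-2}v (leqnn (size v)) c => [|m IH] v sv c hv.
  have [x [y e]] : exists x y, v = x ++ w ++ y by apply: has_occ; rewrite hv.
  move: sv; rewrite e !size_cat; case: (w) wn => //=; lia.
have [x [y e]] : exists x y, v = x ++ w ++ y by apply: has_occ; rewrite hv.
case ox: (occ w x) => [|d].
  exists x, y; split => //; split => //; move: hv; rewrite e occ_cat ox; lia.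
have sx : size x <= m.
  move: sv; rewrite e !size_cat; case: (w) wn => //=; lia.
have [x1 [x2 [e1 [o1 o2]]]] := IH x sx d ox.
exists x1, (x2 ++ w ++ y); split; first by rewrite e e1 -!catA.
split => //; move: hv; rewrite e e1 -!catA occ_cat o1; lia.
Qed.

Lemma split_occ a b v : occ w v = a + 1 + b ->
  exists x z, v = x ++ w ++ z /\ occ w x = a /\ occ w z = b.
Proof.
elim: a v => [|a IH] v hv.
  by have := @first_occ b v; rewrite hv add0n add1n => /(_ erefl).
have hv' : occ w v = (a + 1 + b).+1 by rewrite hv; lia.
have [x0 [y0 [e [o0 oy]]]] := @first_occ (a + 1 + b) v hv'.
have [x1 [z [e1 [o1 oz]]]] := IH y0 oy.
exists (x0 ++ w ++ x1), z; split; first by rewrite e e1 -!catA.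
by split => //; rewrite occ_cat o0 o1; lia.
Qed.

Fixpoint wordE (s : seq A) : gre A :=
  match s with [::] => GEps | a :: s' => GConcat (GLet a) (wordE s') end.

Lemma lang_wordE s v : lang (wordE s) v <-> v = s.
Proof.
elim: s v => [|a s IH] v /=; first by [].
split.
  by move=> [x [y [-> [-> /IH ->]]]].
by move=> ->; exists [:: a], s; split => //; split => //; apply/IH.
Qed.

Lemma sh_wordE s : sheight (wordE s) = 0.
Proof. by elim: s => //= a s ->. Qed.

Definition UE : gre A := GCompl GEmpty.
Definition NE : gre A := GCompl (GConcat UE (GConcat (wordE w) UE)).

Lemma lang_NE v : lang NE v <-> occ w v = 0.
Proof.
split.
  move=> h; case o: (occ w v) => [//|c]; exfalso; apply: h.
  have [x [y e]] := @has_occ v ltac:(by rewrite o).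
  exists x, (w ++ y); split => //; split => //; exists w, y; split => //.
  by split => //; apply/lang_wordE.
move=> h [x [y [e [_ [u [z [e2 [/lang_wordE e3 _]]]]]]]].
move: h; rewrite e e2 e3 occ_cat; lia.
Qed.

Fixpoint PE (j : nat) : gre A :=
  match j with 0 => NE | j'.+1 => GConcat NE (GConcat (wordE w) (PE j')) end.

Lemma sh_PE j : sheight (PE j) = 0.
Proof. by elim: j => [|j IH] /=; rewrite ?IH sh_wordE. Qed.

Lemma lang_PE j v : lang (PE j) v <-> occ w v = j.
Proof.
elim: j v => [|j IH] v /=; first exact: lang_NE.
split.
  move=> [x [y [-> [/lang_NE ox [u [z [-> [/lang_wordE -> /IH oz]]]]]]]].
  by rewrite occ_cat ox oz; lia.
move=> h; have [x [y [e [ox oy]]]] := @first_occ j v h.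
exists x, (w ++ y); split => //; split; first exact/lang_NE.
by exists w, y; split => //; split; [apply/lang_wordE | apply/IH].
Qed.

Definition ME k n : gre A :=
  GConcat (PE k) (GStar (GConcat (wordE w) (PE n.-1))).

Lemma occ_flat n x ws : 0 < n ->
  (forall u, u \in ws -> lang (GConcat (wordE w) (PE n.-1)) u) ->
  occ w (x ++ flatten ws) = occ w x + n * size ws.
Proof.
move=> n0; elim: ws x => [|u ws IH] x hu /=; first by rewrite cats0 muln0 addn0.
have [a [b [-> [/lang_wordE -> /lang_PE ob]]]] := hu u (mem_head _ _).
rewrite catA IH; last by move=> z zi; apply: hu; rewrite inE zi orbT.
rewrite occ_cat ob mulnS; case: (n) n0 => //= n1 _; lia.
Qed.

Lemma lang_ME k n v : 2 <= n -> k < n ->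
  lang (ME k n) v <-> occ w v = k %[mod n].
Proof.
move=> n2 kn; split.
  move=> [x [y [-> [/lang_PE ox [ws [-> hws]]]]]].
  have n0 : 0 < n by lia.
  by rewrite (@occ_flat n x ws n0 hws) ox addnC mulnC modnMDl.
move=> h.
have : occ w v = k + n * (occ w v %/ n).
  by rewrite {1}(divn_eq (occ w v) n) h (modn_small kn); lia.
move: (occ w v %/ n) => m; elim: m v {h} => [|m IH] v hv.
  exists v, [::]; rewrite cats0; split => //; split; first by apply/lang_PE; lia.
  by exists [::].
have hv' : occ w v = k + n * m + 1 + n.-1 by rewrite hv; lia.
have [x [z [e [ox oz]]]] := @split_occ (k + n * m) (n.-1) v hv'.
have [x' [y' [e' [hx' [ws [ey hws]]]]]] := IH x ox.
exists x', (y' ++ w ++ z); split; first by rewrite e e' -catA.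
split => //; exists (rcons ws (w ++ z)); split.
  by rewrite -cats1 flatten_cat ey /= cats0.
move=> u; rewrite mem_rcons inE => /orP [/eqP ->|/hws //].
exists w, z; split => //; split; [exact/lang_wordE | exact/lang_PE].
Qed.

End Occ.

Theorem lemma2p2 (A : finType) (w : seq A) :
  1 < #|A| -> w != [::] -> unbordered w ->
  (forall k : nat, gsh_le (Count w k) 0) /\
  (forall n k : nat, 2 <= n -> k < n -> gsh_le (ModCount w k n) 1).
Proof.
move=> _ wn ub; split.
  move=> k; exists (@PE _ w k); split; first by by rewrite (@sh_PE _ w k).
  by move=> v; rewrite /Count; apply: (@lang_PE _ w wn ub k v).
move=> n k n2 kn; exists (@ME _ w k n); split.
  by rewrite /= !sh_PE !sh_wordE.
by move=> v; rewrite /ModCount; apply: (@lang_ME _ w wn ub k n v n2 kn).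
Qed.
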